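(* Fix $\theta>0$ and real parameters $\mu_b,\mu_c,\sigma_b^2,\sigma_c^2,\sigma_{bc}$ with $\sigma_{bc}>\mu_c$. For the snowdrift game described in the context, let $F_d$ denote the quantity $F$ for group size $d$. Then there exists $d_0\ge2$ such that $F_d>0$ for all $d\ge d_0$. That is, for interactions in large enough groups, weak selection favors the abundance of $C$ whenever $\sigma_{bc}>\mu_c$, for every $\theta>0$.
   Context: For integers $0\le k\le n$ and $\theta>0$ let $\psi_n^k=\frac{\prod_{i=1}^{k}(\theta+i-1)\prod_{j=1}^{n-k}(\theta+j-1)}{\prod_{l=1}^{n}(2\theta+l-1)}$ (empty products equal $1$). For group size $d\ge2$ and real arrays $\mu_{C,k},\mu_{D,k},\sigma_{CC,kl},\sigma_{CD,kl},\sigma_{DD,kl}$ ($k,l=0,\ldots,d-1$) define $$F=\sum_{k=0}^{d-1}\binom{d-1}{k}\psi_{d+1}^{k+1}(\mu_{C,k}-\mu_{D,k})+\sum_{k,l=0}^{d-1}\binom{d-1}{k}\binom{d-1}{l}\Big[-\psi_{2d+1}^{k+l+2}(\sigma_{CC,kl}-\sigma_{CD,kl})+\psi_{2d+1}^{k+l+1}(\sigma_{DD,kl}-\sigma_{CD,kl})\Big].$$ These arrays are the scaled means and second moments of the payoffs $a_k$ (cooperator) and $b_k$ (defector) with $k$ cooperating partners. In the paper's large-population weak-selection approximation, the average abundance of $C$ is $\tfrac12+\tfrac{\delta(1-u)}{u}F$, so weak selection favors the abundance of $C$ iff $F>0$. Snowdrift game: random benefit $b$ and cost $c$ have scaled moments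 $\mu_b,\mu_c,\sigma_b^2,\sigma_c^2,\sigma_{bc}$ (i.e. $E[b]=\mu_b\delta+o(\delta)$, $E[c]=\mu_c\delta+o(\delta)$, $E[b^2]=\sigma_b^2\delta+o(\delta)$, $E[c^2]=\sigma_c^2\delta+o(\delta)$, $E[bc]=\sigma_{bc}\delta+o(\delta)$). Payoffs are $a_k=b-\frac{c}{k+1}$, $b_0=0$, $b_k=b$ for $k\ge1$. Hence $\mu_{C,k}=\mu_b-\frac{\mu_c}{k+1}$, $\mu_{D,k}=\mu_b\mathbf 1_{\{k\ne0\}}$, $\sigma_{CC,kl}=\sigma_b^2-\big(\frac1{k+1}+\frac1{l+1}\big)\sigma_{bc}+\frac{\sigma_c^2}{(k+1)(l+1)}$, $\sigma_{DD,kl}=\sigma_b^2\mathbf 1_{\{k\ne0,\,l\ne0\}}$, $\sigma_{CD,kl}=\big(\sigma_b^2-\frac{\sigma_{bc}}{k+1}\big)\mathbf 1_{\{l\ne0\}}$. *)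

(* Defs.v *)
From HB Require Import structures.
From mathcomp Require Import all_boot all_order all_algebra.
From mathcomp Require Import reals.
Set Implicit Arguments. Unset Strict Implicit. Unset Printing Implicit Defensive.
Import Order.TTheory GRing.Theory Num.Theory.
Local Open Scope ring_scope.

Section Defs.
Variable R : realType.

(* psi_n^k = prod_{i=1}^k (theta+i-1) * prod_{j=1}^{n-k} (theta+j-1)
             / prod_{l=1}^n (2 theta + l - 1)   (used only for 0 <= k <= n) *)
Definition psi (theta : R) (n k : nat) : R :=
  (\prod_(i < k) (theta + i%:R)) * (\prod_(j < (n - k)%N) (theta + j%:R))
  / \prod_(l < n) (2 * theta + l%:R).

Definition Fgen (theta : R) (d : nat) (muC muD : nat -> R)
    (sCC sCD sDD : nat -> nat -> R) : R :=
  \sum_(k < d) ('C(d.-1, k))%:R * psi theta d.+1 k.+1 * (muC k - muD k)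
  + \sum_(k < d) \sum_(l < d) ('C(d.-1, k))%:R * ('C(d.-1, l))%:R *
      (- psi theta (2 * d).+1 (k + l).+2 * (sCC k l - sCD k l)
       + psi theta (2 * d).+1 (k + l).+1 * (sDD k l - sCD k l)).

Definition sd_muC (mub muc : R) (k : nat) : R := mub - muc / (k.+1)%:R.
Definition sd_muD (mub : R) (k : nat) : R := if k != 0%N then mub else 0.
Definition sd_sCC (sb2 sc2 sbc : R) (k l : nat) : R :=
  sb2 - ((k.+1)%:R^-1 + (l.+1)%:R^-1) * sbc + sc2 / ((k.+1)%:R * (l.+1)%:R).
Definition sd_sDD (sb2 : R) (k l : nat) : R :=
  if (k != 0%N) && (l != 0%N) then sb2 else 0.
Definition sd_sCD (sb2 sbc : R) (k l : nat) : R :=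
  if l != 0%N then sb2 - sbc / (k.+1)%:R else 0.

Definition F_snowdrift (theta mub muc sb2 sc2 sbc : R) (d : nat) : R :=
  Fgen theta d (sd_muC mub muc) (sd_muD mub)
    (sd_sCC sb2 sc2 sbc) (sd_sCD sb2 sbc) (sd_sDD sb2).

End Defs.

(* Main.v *)
Require Import Defs.
From HB Require Import structures.
From mathcomp Require Import all_boot all_order all_algebra.
From mathcomp Require Import reals.
From mathcomp Require Import ring lra zify.
Import Order.TTheory GRing.Theory Num.Theory.
Local Open Scope ring_scope.

Section S.
Variable R : realType.
Variable t : R.
Hypothesis tpos : 0 < t.

Lemma den_gt0 (n : nat) : 0 < 2 * t + n%:R.
Proof. have := ler0n R n. move: tpos. move=> h1 h2. lra. Qed.

Lemma prod_den_gt0 n : 0 < \prod_(l < n) (2 * t + l%:R).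
Proof. apply: prodr_gt0 => l _; exact: den_gt0. Qed.

Lemma prod_num_gt0 n : 0 < \prod_(l < n) (t + l%:R).
Proof. apply: prodr_gt0 => l _; have h := ler0n R l; move: tpos => h1; lra. Qed.

Lemma psi_ge0 n k : 0 <= psi t n k.
Proof.
rewrite /psi; apply/ltW/divr_gt0; last exact: prod_den_gt0.
by apply: mulr_gt0; apply: prod_num_gt0.
Qed.

Lemma psi_rec n k : (k <= n)%N -> psi t n k = psi t n.+1 k.+1 + psi t n.+1 k.
Proof.
move=> kn; rewrite /psi subSS subSn // !big_ord_recr /=.
set A := \prod_(i < k) _; set B := \prod_(j < n - k) _; set C := \prod_(l < n) _.
have C0 : C != 0 by rewrite gt_eqF // prod_den_gt0.
have E : (n - k)%:R = n%:R - k%:R :> R by rewrite natrB.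
rewrite E.
have D0 : 2 * t + n%:R != 0 by rewrite gt_eqF // den_gt0.
field; by rewrite C0 D0.
Qed.


Lemma pascal_sum n (g : nat -> R) :
  \sum_(k < n.+2) ('C(n.+1, k))%:R * g k =
  \sum_(k < n.+1) ('C(n, k))%:R * (g k + g k.+1).
Proof.
rewrite big_ord_recl /= bin0.
under eq_bigr => k _ do rewrite /bump /= binS natrD mulrDl.
rewrite big_split /=.
under [X in _ = X]eq_bigr => k _ do rewrite mulrDr.
rewrite big_split /= addrA; congr (_ + _).
rewrite [in RHS]big_ord_recl /= bin0 big_ord_recr /= bin_small // mul0r addr0.
by congr (_ + _); apply: eq_bigr => k _.
Qed.

Lemma sum_c n m a : (a <= m)%N ->
  \sum_(k < n.+1) ('C(n, k))%:R * psi t (n + m) (k + a) = psi t m a.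
Proof.
move=> am; elim: n => [|n IH].
  by rewrite big_ord1 bin0 mul1r.
rewrite (pascal_sum n (fun k => psi t (n.+1 + m) (k + a))) -[RHS]IH; apply: eq_bigr => k _.
rewrite addrC addSn [(k.+1 + a)%N]addSn -psi_rec //.
have := ltn_ord k; lia.
Qed.

Lemma sum_ch n m a : (a <= m)%N ->
  \sum_(k < n.+1) ('C(n, k))%:R / (k.+1)%:R * psi t (n + m.+1) (k + a.+1) =
  (psi t m a - psi t (n + m.+1) a) / (n.+1)%:R.
Proof.
move=> am.
have := @sum_c n.+1 m a am; rewrite big_ord_recl /= bin0 mul1r add0n => E.
have -> : (n + m.+1 = n.+1 + m)%N by rewrite addnS addSn.
rewrite -E addrC addKr mulr_suml; apply: eq_bigr => k _.
rewrite /bump /= add1n addnS addSn.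
have Hk : ((n.+1) * 'C(n, k) = k.+1 * 'C(n.+1, k.+1))%N by rewrite -mul_bin_diag.
have H1 : ('C(n.+1, k.+1))%:R = (n.+1)%:R * ('C(n, k))%:R / (k.+1)%:R :> R.
  rewrite -natrM Hk natrM mulrC mulrA mulVf ?mul1r //.
  by rewrite lt0r_neq0 // ltr0Sn.
rewrite H1 addSn; field.
have h1 := ler0n R n; have h2 := ler0n R k; apply/andP; split; apply: lt0r_neq0; lra.
Qed.

Lemma sum_ce n (f : nat -> R) :
  \sum_(k < n.+1) ('C(n, k))%:R * (k == 0)%:R * f k = f 0%N.
Proof.
rewrite big_ord_recl /= bin0 !mul1r big1 ?addr0 // => k _.
by rewrite /bump /= mulr0 mul0r.
Qed.


Lemma sum_c' n m a N (f : nat -> nat) : (a <= m)%N -> N = (n + m)%N ->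
  (forall k, f k = (k + a)%N) ->
  \sum_(k < n.+1) ('C(n, k))%:R * psi t N (f k) = psi t m a.
Proof.
move=> am -> hf; rewrite -(@sum_c n m a am); apply: eq_bigr => k _; by rewrite hf.
Qed.

Lemma sum_ch' n m a N (f : nat -> nat) : (a <= m)%N -> N = (n + m.+1)%N ->
  (forall k, f k = (k + a.+1)%N) ->
  \sum_(k < n.+1) ('C(n, k))%:R / (k.+1)%:R * psi t N (f k) =
  (psi t m a - psi t N a) / (n.+1)%:R.
Proof.
move=> am -> hf; rewrite -(@sum_ch n m a am); apply: eq_bigr => k _; by rewrite hf.
Qed.

Ltac solve_side := do ?[move=> ? /=]; lia.

Section Sums.
Variable n : nat.
Local Notation N := (2 * n.+1).+1%N.
Local Notation D := ((n.+1)%:R : R).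
Local Notation c k := (('C(n, k))%:R : R).

Lemma O1 : \sum_(k < n.+1) c k * psi t n.+2 k.+1 = psi t 2 1.
Proof. by apply: (@sum_c' n _ _ _ (fun k => k.+1)); solve_side. Qed.
Lemma O2 : \sum_(k < n.+1) c k * psi t N k.+1 = psi t n.+3 1.
Proof. by apply: (@sum_c' n _ _ _ (fun k => k.+1)); solve_side. Qed.
Lemma O3 : \sum_(k < n.+1) c k / (k.+1)%:R * psi t n.+2 k.+1 =
  (psi t 1 0 - psi t n.+2 0) / D.
Proof. by apply: (@sum_ch' n _ _ _ (fun k => k.+1)); solve_side. Qed.
Lemma O4 : \sum_(k < n.+1) c k / (k.+1)%:R * psi t N k.+1 =
  (psi t n.+2 0 - psi t N 0) / D.
Proof. by apply: (@sum_ch' n _ _ _ (fun k => k.+1)); solve_side. Qed.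
Lemma O5 : \sum_(k < n.+1) c k * psi t N k.+2 = psi t n.+3 2.
Proof. by apply: (@sum_c' n _ _ _ (fun k => k.+2)); solve_side. Qed.
Lemma O6 : \sum_(k < n.+1) c k / (k.+1)%:R * psi t N k.+2 =
  (psi t n.+2 1 - psi t N 1) / D.
Proof. by apply: (@sum_ch' n _ _ _ (fun k => k.+2)); solve_side. Qed.
Lemma O7 : \sum_(k < n.+1) c k / (k.+1)%:R * psi t n.+3 k.+1 =
  (psi t 2 0 - psi t n.+3 0) / D.
Proof. by apply: (@sum_ch' n _ _ _ (fun k => k.+1)); solve_side. Qed.

Lemma I1 k : (k <= n)%N -> \sum_(l < n.+1) c l / (l.+1)%:R * psi t N (k + l).+2 =
  (psi t n.+2 k.+1 - psi t N k.+1) / D.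
Proof. by move=> kn; apply: (@sum_ch' n _ _ _ (fun l => (k + l).+2)); solve_side. Qed.
Lemma I2 (k : nat) : \sum_(l < n.+1) c l * ((l : nat) == 0%N)%:R * psi t N (k + l).+2 = psi t N k.+2.
Proof. by rewrite (sum_ce n (fun l => psi t N (k + l).+2)) addn0. Qed.
Lemma I3 k : (k <= n)%N -> \sum_(l < n.+1) c l * psi t N (k + l).+1 = psi t n.+3 k.+1.
Proof. by move=> kn; apply: (@sum_c' n _ _ _ (fun l => (k + l).+1)); solve_side. Qed.
Lemma I4 (k : nat) : \sum_(l < n.+1) c l * ((l : nat) == 0%N)%:R * psi t N (k + l).+1 = psi t N k.+1.
Proof. by rewrite (sum_ce n (fun l => psi t N (k + l).+1)) addn0. Qed.

End Sums.


Section Pointwise.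
Variables (mub muc sb2 sc2 sbc : R).

Lemma pw1 (c p : R) (k : nat) :
  c * p * (sd_muC mub muc k - sd_muD mub k) =
  (- muc) * (c / (k.+1)%:R * p) + mub * (c * (k == 0%N)%:R * p).
Proof. rewrite /sd_muC /sd_muD; case: k => [|k] /=; ring. Qed.

Lemma pw2 (ck cl p2 p1 : R) (k l : nat) :
  ck * cl * (- p2 * (sd_sCC sb2 sc2 sbc k l - sd_sCD sb2 sbc k l)
             + p1 * (sd_sDD sb2 k l - sd_sCD sb2 sbc k l)) =
  ck * (sbc * (cl / (l.+1)%:R * p2)
  + (- sc2 / (k.+1)%:R) * (cl / (l.+1)%:R * p2)
  + (- sb2) * (cl * (l == 0%N)%:R * p2)
  + (sbc / (k.+1)%:R) * (cl * (l == 0%N)%:R * p2)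
  + (sbc / (k.+1)%:R) * (cl * p1)
  + (- sb2 * (k == 0%N)%:R) * (cl * p1)
  + (- sbc / (k.+1)%:R) * (cl * (l == 0%N)%:R * p1)
  + (sb2 * (k == 0%N)%:R) * (cl * (l == 0%N)%:R * p1)).
Proof.
rewrite /sd_sCC /sd_sCD /sd_sDD; case: k => [|k]; case: l => [|l] /=;
  rewrite ?mul1r ?mulr1 ?invfM ?invr1 ?mul1r ?mulr1; ring.
Qed.

End Pointwise.


Section Main.
Variables (mub muc sb2 sc2 sbc : R) (n : nat).
Local Notation N := (2 * n.+1).+1%N.
Local Notation D := ((n.+1)%:R : R).
Local Notation c k := (('C(n, k))%:R : R).

Definition Fexpr :=
 (- muc) * ((psi t 1 0 - psi t n.+2 0) / D) + mub * psi t n.+2 1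
 + (sbc / D * psi t 2 1 + (- sbc / D) * psi t n.+3 1
    + (- sc2 / D) * ((psi t 1 0 - psi t n.+2 0) / D)
    + (sc2 / D) * ((psi t n.+2 0 - psi t N 0) / D)
    + (- sb2) * psi t n.+3 2 + sbc * ((psi t n.+2 1 - psi t N 1) / D)
    + sbc * ((psi t 2 0 - psi t n.+3 0) / D) + (- sb2) * psi t n.+3 1
    + (- sbc) * ((psi t n.+2 0 - psi t N 0) / D) + sb2 * psi t N 1).

Lemma F_formula : F_snowdrift t mub muc sb2 sc2 sbc n.+1 = Fexpr.
Proof.
rewrite /F_snowdrift /Fgen /= /Fexpr; congr (_ + _).
  under eq_bigr => k _ do rewrite pw1.
  rewrite big_split /= -!mulr_sumr O3.
  by rewrite (sum_ce n (fun k => psi t n.+2 k.+1)).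
transitivity (\sum_(k < n.+1) (
  sbc / D * (c k * psi t n.+2 k.+1) + (- sbc / D) * (c k * psi t N k.+1)
  + (- sc2 / D) * (c k / (k.+1)%:R * psi t n.+2 k.+1)
  + (sc2 / D) * (c k / (k.+1)%:R * psi t N k.+1)
  + (- sb2) * (c k * psi t N k.+2) + sbc * (c k / (k.+1)%:R * psi t N k.+2)
  + sbc * (c k / (k.+1)%:R * psi t n.+3 k.+1)
  + (- sb2) * (c k * ((k : nat) == 0%N)%:R * psi t n.+3 k.+1)
  + (- sbc) * (c k / (k.+1)%:R * psi t N k.+1)
  + sb2 * (c k * ((k : nat) == 0%N)%:R * psi t N k.+1))).
  apply: eq_bigr => k _.
  have kn : (k <= n)%N by rewrite -ltnS ltn_ord.
  under eq_bigr => l _ do rewrite pw2.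
  rewrite -mulr_sumr !big_split /= -!mulr_sumr (@I1 n k kn) (@I3 n k kn) I2 I4.
  ring.
rewrite !big_split /= -!mulr_sumr O1 O2 O3 O4 O5 O6 O7.
rewrite (sum_ce n (fun k => psi t n.+3 k.+1)) (sum_ce n (fun k => psi t N k.+1)).
ring.
Qed.

End Main.


Lemma psi00 : psi t 0 0 = 1.
Proof. by rewrite /psi !big_ord0 mul1r divr1. Qed.

Lemma psi0S N : psi t N.+1 0 = psi t N 0 * ((t + N%:R) / (2 * t + N%:R)).
Proof.
rewrite /psi !subn0 !big_ord0 !mul1r !big_ord_recr /=.
have h1 := prod_den_gt0 N; have h2 := den_gt0 N.
field; apply/andP; split; apply: lt0r_neq0 => //.
Qed.

Lemma psi1S N : psi t N.+1 1 = t / (2 * t + N%:R) * psi t N 0.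
Proof.
rewrite /psi subSS !subn0 big_ord1 big_ord0 mul1r addr0 !big_ord_recr /=.
have h1 := prod_den_gt0 N; have h2 := den_gt0 N.
field; apply/andP; split; apply: lt0r_neq0 => //.
Qed.

Lemma psi0_dec N : psi t N.+1 0 <= psi t N 0.
Proof.
rewrite [X in _ <= X](@psi_rec N 0) //; have h := psi_ge0 N.+1 1; lra.
Qed.

Lemma psi0_mono M N : (M <= N)%N -> psi t N 0 <= psi t M 0.
Proof.
move=> /subnK <-; elim: (N - M)%N => [|k IH]; first by rewrite add0n.
rewrite addSn; exact: le_trans (psi0_dec _) IH.
Qed.

Lemma psi0_le1 N : psi t N 0 <= 1.
Proof. by rewrite -psi00; apply: psi0_mono. Qed.

Lemma psi10 : psi t 1 0 = 2^-1.
Proof.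
rewrite /psi subn0 !big_ord0 big_ord1 big_ord1 mul1r !addr0.
have h : t != 0 by apply: lt0r_neq0.
field; exact: h.
Qed.

Lemma bernoulli (a : R) (m : nat) : 0 <= a -> a <= 1 ->
  (1 - a) ^+ m * (1 + m%:R * a) <= 1.
Proof.
move=> a0 a1; elim: m => [|m IH]; first by rewrite expr0 mul0r addr0 mulr1.
rewrite exprSr -mulrA.
have hm := ler0n R m.
have h : (1 - a) * (1 + (m.+1)%:R * a) <= 1 + m%:R * a.
  rewrite -natr1; nra.
have hp : 0 <= (1 - a) ^+ m by apply: exprn_ge0; lra.
apply: le_trans IH; by apply: ler_wpM2l.
Qed.

Lemma psi_pow (m : nat) : 1 <= m%:R * t -> forall N,
  psi t N 0 ^+ m * (2 * t + N%:R) <= 2 * t.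
Proof.
move=> mt; elim => [|N IH]; first by rewrite psi00 expr1n mul1r addr0.
rewrite psi0S exprMn.
set r := (t + N%:R) / (2 * t + N%:R).
have tp := tpos. have hN := ler0n R N; have d0 := den_gt0 N.
have ra : r = 1 - t / (2 * t + N%:R) by rewrite /r; field; apply: lt0r_neq0.
have a0 : 0 <= t / (2 * t + N%:R) by apply: divr_ge0; lra.
have a1 : t / (2 * t + N%:R) <= 1 by rewrite ler_pdivrMr //; lra.
have B := @bernoulli _ m a0 a1; rewrite -ra in B.
have rp : 0 <= r ^+ m by rewrite ra; apply: exprn_ge0; lra.
have key : r ^+ m * (2 * t + N.+1%:R) <= 2 * t + N%:R.
  have E : (1 + m%:R * (t / (2 * t + N%:R))) * (2 * t + N%:R)
           = 2 * t + N%:R + m%:R * t by field; apply: lt0r_neq0.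
  have B2 : r ^+ m * (2 * t + N%:R + m%:R * t) <= 2 * t + N%:R.
    rewrite -E mulrA; rewrite -[X in _ <= X]mul1r; apply: ler_wpM2r; lra.
  apply: le_trans B2; apply: ler_wpM2l => //; rewrite -natr1; lra.
have pp : 0 <= psi t N 0 ^+ m by apply: exprn_ge0; apply: psi_ge0.
apply: le_trans IH; rewrite -mulrA; by apply: ler_wpM2l.
Qed.


Lemma tb (a x B : R) : - B <= x -> x <= B -> - (`|a| * B) <= a * x.
Proof.
move=> h1 h2; case: (lerP 0 a) => ha; [rewrite ger0_norm // | rewrite ltr0_norm //]; nra.
Qed.

Lemma small_bound (D E q P : R) : 0 < D -> D <= E -> 0 <= q -> q <= P ->
  D * (t / E * q) <= t * P.
Proof.
move=> D0 DE q0 qP; have tp := tpos.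
have E0 : 0 < E by lra.
have -> : D * (t / E * q) = t * q * (D / E) by field; apply: lt0r_neq0.
have h : D / E <= 1 by rewrite ler_pdivrMr //; lra.
have h2 : 0 <= t * q by nra.
have : t * q * (D / E) <= t * q by rewrite -[X in _ <= X]mulr1; apply: ler_wpM2l.
nra.
Qed.

Section Bound.
Variables (mub muc sb2 sc2 sbc : R) (n : nat).
Local Notation N := (2 * n.+1).+1%N.
Local Notation D := ((n.+1)%:R : R).

Lemma Fbound :
  (sbc - muc) / 2 - (`|muc| + `|mub| + 6 * `|sbc| + 3 * `|sb2|) * ((1 + t) * psi t n.+1 0)
  - (`|sc2| * 2) / D <= D * Fexpr mub muc sb2 sc2 sbc n.
Proof.
have tp := tpos.
set p := psi t n.+1 0; set B := (1 + t) * p.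
have D0 : 0 < D by rewrite ltr0Sn.
have D1 : 1 <= D by rewrite ler1n.
have p0 : 0 <= p := psi_ge0 _ _.
have p1 : p <= 1 := psi0_le1 _.
have B0 : t * p <= B by rewrite /B; nra.
set a1 := psi t n.+2 0; set a2 := psi t n.+3 0; set a3 := psi t N 0.
have a10 : 0 <= a1 := psi_ge0 _ _. have a20 : 0 <= a2 := psi_ge0 _ _.
have a30 : 0 <= a3 := psi_ge0 _ _.
have a1p : a1 <= p by apply: psi0_mono; lia.
have a2p : a2 <= p by apply: psi0_mono; lia.
have a3p : a3 <= p by apply: psi0_mono; lia.
set x1 := psi t n.+3 1; set x2 := psi t n.+2 1; set x3 := psi t N 1.
set y := psi t n.+3 2.
have x10 : 0 <= x1 := psi_ge0 _ _. have x20 : 0 <= x2 := psi_ge0 _ _.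
have x30 : 0 <= x3 := psi_ge0 _ _. have y0 : 0 <= y := psi_ge0 _ _.
have hx2 : D * x2 <= t * p.
  rewrite /x2 psi1S; apply: small_bound => //.
  - by have := ler0n R n.+1; lra.
have hx1 : D * x1 <= t * p.
  rewrite /x1 psi1S; apply: small_bound => //.
  have := ler0n R n; rewrite -!natr1 => ?; lra.
have hx3 : D * x3 <= t * p.
  rewrite /x3 psi1S; apply: small_bound => //.
  - have h : (n.+1%:R : R) <= (2 * n.+1)%:R by rewrite ler_nat leq_pmull.
    lra.
  - exact: psi_ge0.
  - by apply: psi0_mono; rewrite leq_pmull.
have hy : y <= x2.
  by rewrite /x2 (@psi_rec n.+2 1) // -/y -/x1; lra.
have hDy : D * y <= D * x2 by apply: ler_wpM2l => //; lra.
have h21 : psi t 2 1 = 2^-1 - psi t 2 0 by rewrite -psi10 (@psi_rec 1 0) //; ring.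
have xx1 : x1 <= D * x1 by rewrite -[X in X <= _]mul1r; apply: ler_wpM2r.
have xx2 : x2 <= D * x2 by rewrite -[X in X <= _]mul1r; apply: ler_wpM2r.
have xx3 : x3 <= D * x3 by rewrite -[X in X <= _]mul1r; apply: ler_wpM2r.
have E : D * Fexpr mub muc sb2 sc2 sbc n =
  (sbc - muc) / 2 + (muc * a1 + mub * (D * x2) + (- sbc) * x1 + (- sb2) * (D * y)
  + sbc * x2 + (- sbc) * x3 + (- sbc) * a2 + (- sb2) * (D * x1) + (- sbc) * a1
  + sbc * a3 + sb2 * (D * x3)) + sc2 * (2 * a1 - a3 - 2^-1) / D.
  rewrite /Fexpr psi10 h21 -/a1 -/a2 -/a3 -/x1 -/x2 -/x3 -/y.
  field; apply: lt0r_neq0; have := ler0n R n; move=> ?; lra.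
rewrite E.
have hB : p <= B by rewrite /B; nra.
have Bnn : 0 <= B by lra.
have Dy0 : 0 <= D * y by apply: mulr_ge0; lra.
have t1 := @tb muc a1 B ltac:(lra) ltac:(lra).
have t2 := @tb mub (D * x2) B ltac:(lra) ltac:(lra).
have t3 := @tb (- sbc) x1 B ltac:(lra) ltac:(lra).
have t4 := @tb (- sb2) (D * y) B ltac:(lra) ltac:(lra).
have t5 := @tb sbc x2 B ltac:(lra) ltac:(lra).
have t6 := @tb (- sbc) x3 B ltac:(lra) ltac:(lra).
have t7 := @tb (- sbc) a2 B ltac:(lra) ltac:(lra).
have t8 := @tb (- sb2) (D * x1) B ltac:(lra) ltac:(lra).
have t9 := @tb (- sbc) a1 B ltac:(lra) ltac:(lra).
have t10 := @tb sbc a3 B ltac:(lra) ltac:(lra).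
have t11 := @tb sb2 (D * x3) B ltac:(lra) ltac:(lra).
have t12 := @tb sc2 (2 * a1 - a3 - 2^-1) 2 ltac:(lra) ltac:(lra).
have t12' : - (`|sc2| * 2) / D <= sc2 * (2 * a1 - a3 - 2^-1) / D.
  by apply: ler_wpM2r => //; rewrite invr_ge0; lra.
rewrite !normrN in t3 t4 t6 t7 t8 t9.
rewrite mulNr in t12'.
move: t1 t2 t3 t4 t5 t6 t7 t8 t9 t10 t11 t12'.
set W := (2 * a1 - a3 - 2^-1). set DD := (n.+1%:R : R).
clearbody W DD p B a1 a2 a3 x1 x2 x3 y. move=> *. lra.
Qed.

End Bound.

End S.

Theorem mainTheorem7 (R : realType) (theta mub muc sb2 sc2 sbc : R) :
  0 < theta -> muc < sbc ->
  exists d0 : nat, (2 <= d0)%N /\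
    forall d : nat, (d0 <= d)%N -> 0 < F_snowdrift theta mub muc sb2 sc2 sbc d.
Proof.
move=> tp hm.
pose g := (sbc - muc) / 2.
have g0 : 0 < g by rewrite /g; lra.
pose K : R := `|muc| + `|mub| + 6 * `|sbc| + 3 * `|sb2|.
have K0 : 0 <= K.
  rewrite /K; have := normr_ge0 muc; have := normr_ge0 mub;
  have := normr_ge0 sbc; have := normr_ge0 sb2; move=> *; lra.
pose Kt := K * (1 + theta).
have Kt0 : 0 <= Kt by rewrite /Kt; apply: mulr_ge0; lra.
pose delta := g / (2 * (Kt + 1)).
have delta0 : 0 < delta by rewrite /delta; apply: divr_gt0; lra.
have hKd : Kt * delta < g / 2.
  have E : Kt * delta = g / 2 - delta / (1 : R) by rewrite /delta; field; lra.
  rewrite E divr1; lra.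
pose m := Num.Def.archi_bound theta^-1.
have hm1 : 1 <= m%:R * theta.
  have h := @archi_boundP R theta^-1 ltac:(rewrite invr_ge0; lra).
  have : theta^-1 * theta <= m%:R * theta by apply: ler_wpM2r; lra.
  by rewrite mulVf //; apply: lt0r_neq0.
have m0 : m != 0%N.
  apply/negP => /eqP h; rewrite h mul0r in hm1; lra.
pose X := 2 * theta / delta ^+ m + 4 * `|sc2| / g.
have dm0 : 0 < delta ^+ m by apply: exprn_gt0.
have X1 : 0 <= 2 * theta / delta ^+ m by apply: divr_ge0; lra.
have X2 : 0 <= 4 * `|sc2| / g by apply: divr_ge0; have := normr_ge0 sc2; lra.
exists (Num.Def.archi_bound X).+2; split => // d hd.
case: d hd => [|n] hd; first by [].
have hX := @archi_boundP R X ltac:(rewrite /X; lra).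
have hXD : X < (n.+1)%:R.
  apply: lt_le_trans hX _; rewrite ler_nat; exact: leq_trans (leq_trans (leqnSn _) (leqnSn _)) hd.
set D := (n.+1)%:R : R in hXD *.
have D0 : 0 < D by rewrite /D ltr0Sn.
rewrite F_formula //.
have FB := @Fbound R theta tp mub muc sb2 sc2 sbc n.
rewrite -/D in FB.
set p := psi theta n.+1 0 in FB.
have p0 : 0 <= p by apply: psi_ge0.
have hp : p <= delta.
  case: (lerP p delta) => // hlt.
  have h1 := @psi_pow R theta tp m hm1 n.+1.
  rewrite -/p -/D in h1.
  have h2 : delta ^+ m < p ^+ m by rewrite ltrXn2r //; lra.
  have h3 : 2 * theta <= D * delta ^+ m.
    rewrite -ler_pdivrMr //; move: hXD; rewrite /X => ?; lra.
  have h4 : 0 <= p ^+ m by apply: exprn_ge0.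
  have : D * delta ^+ m < p ^+ m * (2 * theta + D) by nra.
  lra.
have h5 : K * ((1 + theta) * p) <= Kt * delta.
  rewrite mulrA -/Kt; by apply: ler_wpM2l.
have h6 : `|sc2| * 2 / D < g / 2.
  rewrite ltr_pdivrMr //.
  have : 4 * `|sc2| / g < D by rewrite /X in hXD; lra.
  rewrite ltr_pdivrMr // => h; lra.
have : 0 < D * Fexpr R theta mub muc sb2 sc2 sbc n.
  rewrite -/g -/K in FB. move: FB h5 h6 hKd. clearbody g K Kt delta p D. move=> h1 h2 h3 h4. lra.
by rewrite pmulr_rgt0.
Qed.
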